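(* With $O(2)$ acting on $\mathbb R[x,y]$ by $(\varphi\cdot P)=P\circ\varphi^{-1}$ and stabilizers taken in $O(2)$: (1) for $m\ge1$, the stabilizer of $p_m(x,y)$ is $D_m$, and no polynomial in $\mathbb R[x,y]$ of degree $<m$ has stabilizer equal to $D_m$; (2) for $m\ge2$, the stabilizer of $p_m(x,y)+(x^2+y^2)q_m(x,y)$ is $K_m$, and no polynomial in $\mathbb R[x,y]$ of degree $<m+2$ has stabilizer equal to $K_m$; (3) the stabilizer of $x+xy$ is $K_1=\{\mathrm{Id}\}$, and no polynomial of degree $<2$ has stabilizer $K_1$.
   Context: $\mathbb R^2=\mathbb C$, $z=x+iy$; $O(2)$ the Euclidean orthogonal group; $\sigma_m(z)=e^{2\pi i/m}z$, $\tau(z)=\bar z$; $K_m=\langle\sigma_m\rangle$, $D_m=\langle\sigma_m,\tau\rangle$; $p_m=\mathrm{Re}(z^m)$, $q_m=\mathrm{Im}(z^m)$. Degree means total degree. *)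

(* Defs.v *)
From Stdlib Require Import Reals.
Open Scope R_scope.

Record mat2 : Type := M2 { m11 : R; m12 : R; m21 : R; m22 : R }.

(* phi(x,y) = (m11 x + m12 y, m21 x + m22 y) *)
Definition mmul (A B : mat2) : mat2 :=
  M2 (m11 A * m11 B + m12 A * m21 B) (m11 A * m12 B + m12 A * m22 B)
     (m21 A * m11 B + m22 A * m21 B) (m21 A * m12 B + m22 A * m22 B).

Definition mid : mat2 := M2 1 0 0 1.

Fixpoint mpow (A : mat2) (n : nat) : mat2 :=
  match n with O => mid | S n => mmul A (mpow A n) end.

Definition mtrans (A : mat2) : mat2 := M2 (m11 A) (m21 A) (m12 A) (m22 A).

Definition inO2 (A : mat2) : Prop := mmul (mtrans A) A = mid.

(* sigma_m(z) = e^{2 pi i/m} z, tau(z) = conj z *)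
Definition sigma (m : nat) : mat2 :=
  M2 (cos (2 * PI / INR m)) (- sin (2 * PI / INR m))
     (sin (2 * PI / INR m)) (cos (2 * PI / INR m)).
Definition tau : mat2 := M2 1 0 0 (-1).

Definition inK (m : nat) (A : mat2) : Prop := exists k : nat, A = mpow (sigma m) k.
Definition inD (m : nat) (A : mat2) : Prop :=
  exists k : nat, A = mpow (sigma m) k \/ A = mmul (mpow (sigma m) k) tau.

(* A polynomial: coefficient c i j of x^i y^j, vanishing when i + j >= bound. *)
Record poly2 : Type := Poly2 {
  coef : nat -> nat -> R;
  pbound : nat;
  coef_pbound : forall i j, (pbound <= i + j)%nat -> coef i j = 0 }.

Definition peval (P : poly2) (x y : R) : R :=
  sum_f_R0 (fun i => sum_f_R0 (fun j => coef P i j * x ^ i * y ^ j) (pbound P)) (pbound P).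

(* total degree < d  (the zero polynomial has degree < d for every d) *)
Definition deg_lt (P : poly2) (d : nat) : Prop :=
  forall i j, (d <= i + j)%nat -> coef P i j = 0.

Definition app (A : mat2) (x y : R) : R * R :=
  (m11 A * x + m12 A * y, m21 A * x + m22 A * y).

(* phi is in the stabilizer of (the polynomial function) f for the action
   (phi . f) = f o phi^{-1}; for phi in O(2), phi^{-1} = phi^T. *)
Definition in_stab (f : R -> R -> R) (A : mat2) : Prop :=
  inO2 A /\ forall x y, f (fst (app (mtrans A) x y)) (snd (app (mtrans A) x y)) = f x y.

(* z^m = (Re, Im) computed by complex multiplication *)
Fixpoint zpow (m : nat) (x y : R) : R * R :=
  match m with
  | O => (1, 0)
  | S m => let (a, b) := zpow m x y in (a * x - b * y, a * y + b * x)
  end.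
Definition pm (m : nat) (x y : R) : R := fst (zpow m x y).
Definition qm (m : nat) (x y : R) : R := snd (zpow m x y).

(* Main.v *)
From Stdlib Require Import Reals Lra Lia ZArith.
Require Import Defs.
Open Scope R_scope.

Definition rot (a : R) : mat2 := M2 (cos a) (- sin a) (sin a) (cos a).
Definition refl (a : R) : mat2 := M2 (cos a) (sin a) (sin a) (- cos a).

Lemma cs1 t : cos t * cos t + sin t * sin t = 1.
Proof. pose proof (sin2_cos2 t) as H. unfold Rsqr in H. lra. Qed.

Lemma rot_mul a b : mmul (rot a) (rot b) = rot (a + b).
Proof. unfold mmul, rot; cbn. rewrite cos_plus, sin_plus. f_equal; ring. Qed.

Lemma mpow_rot a k : mpow (rot a) k = rot (INR k * a).
Proof.
  induction k as [|k IH]; cbn [mpow].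
  - unfold mid, rot. replace (INR 0 * a) with 0 by (simpl; ring).
    rewrite cos_0, sin_0, Ropp_0. reflexivity.
  - rewrite IH, rot_mul, S_INR. replace ((INR k + 1) * a) with (a + INR k * a) by ring; reflexivity.
Qed.

Lemma rot_tau a : mmul (rot a) tau = refl a.
Proof. unfold mmul, rot, tau, refl; cbn. f_equal; ring. Qed.

Lemma mmul_mid_r A : mmul A mid = A.
Proof. destruct A; unfold mmul, mid; cbn. f_equal; ring. Qed.

Lemma inO2_rot a : inO2 (rot a).
Proof. unfold inO2, mmul, mtrans, rot, mid; cbn. pose proof (cs1 a). f_equal; nra. Qed.

Lemma inO2_refl a : inO2 (refl a).
Proof. unfold inO2, mmul, mtrans, refl, mid; cbn. pose proof (cs1 a). f_equal; nra. Qed.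

Lemma app_rot a r t : app (mtrans (rot a)) (r * cos t) (r * sin t) = (r * cos (t - a), r * sin (t - a)).
Proof. unfold app, mtrans, rot; cbn. rewrite cos_minus, sin_minus. f_equal; ring. Qed.

Lemma app_refl a r t : app (mtrans (refl a)) (r * cos t) (r * sin t) = (r * cos (a - t), r * sin (a - t)).
Proof. unfold app, mtrans, refl; cbn. rewrite cos_minus, sin_minus. f_equal; ring. Qed.

Lemma angle_exists c s : c * c + s * s = 1 -> exists th, 0 <= th /\ cos th = c /\ sin th = s.
Proof.
  intros H.
  assert (Hc : -1 <= c <= 1) by nra.
  pose proof (acos_bound c) as Hb.
  pose proof PI_RGT_0.
  assert (E : sqrt (1 - c²) = Rabs s).
  { replace (1 - c²) with (Rsqr (Rabs s)) by (rewrite <- Rsqr_abs; unfold Rsqr; lra).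
    apply sqrt_Rsqr, Rabs_pos. }
  destruct (Rle_or_lt 0 s) as [Hs|Hs].
  - exists (acos c). split; [lra|]. split; [apply cos_acos; lra|].
    rewrite sin_acos by lra. rewrite E. apply Rabs_pos_eq; lra.
  - exists (2 * PI - acos c). split; [lra|].
    rewrite cos_minus, sin_minus, cos_2PI, sin_2PI, cos_acos by lra.
    rewrite sin_acos by lra. rewrite E, Rabs_left by lra. split; ring.
Qed.

Lemma polar x y : exists r t, x = r * cos t /\ y = r * sin t.
Proof.
  set (r := sqrt (x * x + y * y)).
  assert (Hr : r * r = x * x + y * y) by (apply sqrt_sqrt; nra).
  assert (Hr0 : 0 <= r) by apply sqrt_pos.
  destruct (Req_dec r 0) as [E|E].
  - exists 0, 0. rewrite E in Hr. split; nra.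
  - destruct (angle_exists (x / r) (y / r)) as [t [_ [Hc Hs]]].
    + replace (x / r * (x / r) + y / r * (y / r)) with ((x*x+y*y)/(r*r)) by (field; auto).
      rewrite <- Hr. field. auto.
    + exists r, t. rewrite Hc, Hs. split; field; auto.
Qed.

Lemma O2_class A : inO2 A -> exists th, 0 <= th /\ (A = rot th \/ A = refl th).
Proof.
  destruct A as [a b c d]. unfold inO2, mmul, mtrans, mid; cbn. intros H.
  injection H as H1 H2 H3 H4.
  destruct (angle_exists a c) as [th [Hth [Hc Hs]]]; [lra|].
  exists th. split; auto.
  set (l := a * d - c * b).
  assert (Eb : b = - l * c).
  { assert (- l * c - b = - a * (a * b + c * d) + b * (a * a + c * c - 1)) by (unfold l; ring).
    rewrite H2, H1 in H. lra. }
  assert (Ed : d = l * a).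
  { assert (l * a - d = - c * (a * b + c * d) + d * (a * a + c * c - 1)) by (unfold l; ring).
    rewrite H2, H1 in H. lra. }
  assert (Hl : l * l = 1).
  { assert (l * l = (a*a+c*c)*(b*b+d*d) - (a*b+c*d)*(a*b+c*d)) by (unfold l; ring).
    rewrite H1, H4, H2 in H. lra. }
  assert (l = 1 \/ l = -1) as [L|L] by nra.
  - left. unfold rot. rewrite Hc, Hs, Eb, Ed, L. f_equal; ring.
  - right. unfold refl. rewrite Hc, Hs, Eb, Ed, L. f_equal; ring.
Qed.

Lemma zpow_polar m r t : zpow m (r * cos t) (r * sin t) = (r ^ m * cos (INR m * t), r ^ m * sin (INR m * t)).
Proof.
  induction m as [|m IH]; cbn [zpow].
  - simpl. rewrite Rmult_0_l, cos_0, sin_0. f_equal; ring.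
  - rewrite IH. rewrite S_INR. replace ((INR m + 1) * t) with (INR m * t + t) by ring.
    rewrite cos_plus, sin_plus. simpl pow. f_equal; ring.
Qed.

Lemma sq_polar r t : (r * cos t) ^ 2 + (r * sin t) ^ 2 = r ^ 2.
Proof. pose proof (cs1 t). replace ((r * cos t) ^ 2 + (r * sin t) ^ 2) with (r^2 * (cos t * cos t + sin t * sin t)) by ring. rewrite H; ring. Qed.

Lemma nat_unbounded x : exists n : nat, x < INR n.
Proof.
  destruct (archimed (Rabs x)) as [H1 _].
  assert (0 <= Rabs x) by apply Rabs_pos.
  assert (Hz : (0 <= up (Rabs x))%Z) by (apply le_IZR; lra).
  exists (Z.to_nat (up (Rabs x))). rewrite INR_IZR_INZ, Z2Nat.id by auto.
  pose proof (Rle_abs x). lra.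
Qed.

Lemma floor_nat n x : 0 <= x -> x < 2 * INR n * PI -> exists k, 2 * INR k * PI <= x < 2 * INR (S k) * PI.
Proof.
  induction n as [|n IH]; intros H0 H1.
  - simpl in H1. lra.
  - destruct (Rlt_or_le x (2 * INR n * PI)) as [L|L].
    + apply IH; auto.
    + exists n. split; auto.
Qed.

Lemma cos1 x : 0 <= x -> cos x = 1 -> exists k : nat, x = 2 * INR k * PI.
Proof.
  intros H0 H1. pose proof PI_RGT_0.
  destruct (nat_unbounded (x / (2 * PI))) as [n Hn].
  destruct (floor_nat n x H0) as [k [Hk1 Hk2]].
  { apply (Rmult_lt_compat_r (2 * PI)) in Hn; [|lra].
    replace (x / (2 * PI) * (2 * PI)) with x in Hn by (field; lra). lra. }
  exists k. set (y := x - 2 * INR k * PI).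
  assert (Cy : cos y = 1).
  { rewrite <- (cos_period y k). unfold y. replace (x - 2 * INR k * PI + 2 * INR k * PI) with x by ring. auto. }
  rewrite S_INR in Hk2.
  destruct (Req_dec y 0) as [E|E]; [unfold y in E; lra|].
  exfalso.
  assert (0 < sin (y / 2)) by (apply sin_gt_0; unfold y in *; lra).
  replace y with (2 * (y / 2)) in Cy by field.
  rewrite cos_2a_sin in Cy. nra.
Qed.

Lemma cos_shift X k : cos (X - 2 * INR k * PI) = cos X.
Proof. rewrite <- (cos_period (X - 2 * INR k * PI) k). f_equal; ring. Qed.
Lemma sin_shift X k : sin (X - 2 * INR k * PI) = sin X.
Proof. rewrite <- (sin_period (X - 2 * INR k * PI) k). f_equal; ring. Qed.
Lemma cos_shift' X k : cos (X + 2 * INR k * PI) = cos X.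
Proof. apply cos_period. Qed.
Lemma sin_shift' X k : sin (X + 2 * INR k * PI) = sin X.
Proof. apply sin_period. Qed.

Fixpoint sumk (n : nat) (F : nat -> R) : R :=
  match n with O => 0 | S n => sumk n F + F n end.

Lemma sumk_plus n f g : sumk n (fun k => f k + g k) = sumk n f + sumk n g.
Proof. induction n; simpl; [ring|rewrite IHn; ring]. Qed.
Lemma sumk_scal n c f : sumk n (fun k => c * f k) = c * sumk n f.
Proof. induction n; simpl; [ring|rewrite IHn; ring]. Qed.
Lemma sumk_ext n f g : (forall k, f k = g k) -> sumk n f = sumk n g.
Proof. intros H; induction n; simpl; [auto|rewrite IHn, H; auto]. Qed.
Lemma sumk_const n c : sumk n (fun _ => c) = INR n * c.
Proof. induction n; simpl sumk; [simpl; ring|rewrite IHn, S_INR; ring]. Qed.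

Lemma tele_cos n phi h : 2 * sin h * sumk n (fun k => cos (phi + 2 * INR k * h)) = sin (phi + (2 * INR n - 1) * h) - sin (phi - h).
Proof.
  induction n as [|n IH]; simpl sumk.
  - simpl INR. replace (phi + (2 * 0 - 1) * h) with (phi - h) by ring. ring.
  - rewrite Rmult_plus_distr_l, IH, S_INR.
    replace (phi + (2 * (INR n + 1) - 1) * h) with ((phi + 2 * INR n * h) + h) by ring.
    replace (phi + (2 * INR n - 1) * h) with ((phi + 2 * INR n * h) - h) by ring.
    rewrite sin_plus, (sin_minus (phi + 2 * INR n * h) h). ring.
Qed.

Lemma tele_sin n phi h : 2 * sin h * sumk n (fun k => sin (phi + 2 * INR k * h)) = cos (phi - h) - cos (phi + (2 * INR n - 1) * h).
Proof.
  induction n as [|n IH]; simpl sumk.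
  - simpl INR. replace (phi + (2 * 0 - 1) * h) with (phi - h) by ring. ring.
  - rewrite Rmult_plus_distr_l, IH, S_INR.
    replace (phi + (2 * (INR n + 1) - 1) * h) with ((phi + 2 * INR n * h) + h) by ring.
    replace (phi + (2 * INR n - 1) * h) with ((phi + 2 * INR n * h) - h) by ring.
    rewrite cos_plus, (cos_minus (phi + 2 * INR n * h) h). ring.
Qed.

Definition shiftm (m k : nat) : R := 2 * PI * INR k / INR m.

Lemma trig_sum_zero m s t : (1 <= m)%nat -> (0 < s)%nat -> (s < 2 * m)%nat -> s <> m ->
  sumk m (fun k => cos (INR s * (t + shiftm m k))) = 0 /\
  sumk m (fun k => sin (INR s * (t + shiftm m k))) = 0.
Proof.
  intros Hm Hs1 Hs2 Hsm. pose proof PI_RGT_0.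
  assert (Hm0 : 0 < INR m) by (apply lt_0_INR; lia).
  set (h := PI * INR s / INR m).
  assert (Hh : sin h <> 0).
  { assert (0 < INR s) by (apply lt_0_INR; lia).
    destruct (Nat.lt_ge_cases s m) as [L|L].
    - apply lt_INR in L. assert (0 < sin h); [|lra]. apply sin_gt_0; unfold h.
      + apply Rdiv_lt_0_compat; nra.
      + apply (Rmult_lt_reg_r (INR m)); auto. field_simplify; [|lra]. nra.
    - assert (L' : (m < s)%nat) by lia. apply lt_INR in L'.
      assert (L2 : (s < 2 * m)%nat) by lia. apply lt_INR in L2. rewrite mult_INR in L2. simpl (INR 2) in L2.
      assert (sin h < 0); [|lra]. apply sin_lt_0; unfold h.
      + apply (Rmult_lt_reg_r (INR m)); auto. field_simplify; [|lra]. nra.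
      + apply (Rmult_lt_reg_r (INR m)); auto. field_simplify; [|lra]. nra. }
  assert (Ek : forall k, INR s * (t + shiftm m k) = INR s * t + 2 * INR k * h).
  { intros k. unfold shiftm, h. field. lra. }
  assert (En : INR s * t + (2 * INR m - 1) * h = (INR s * t - h) + 2 * INR s * PI).
  { unfold h. field. lra. }
  split.
  - pose proof (tele_cos m (INR s * t) h) as T.
    rewrite (sumk_ext _ _ (fun k => cos (INR s * t + 2 * INR k * h))) by (intros; rewrite Ek; auto).
    rewrite En, sin_shift', Rminus_diag in T.
    apply Rmult_integral in T. destruct T as [T|T]; [lra|auto].
  - pose proof (tele_sin m (INR s * t) h) as T.
    rewrite (sumk_ext _ _ (fun k => sin (INR s * t + 2 * INR k * h))) by (intros; rewrite Ek; auto).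
    rewrite En, cos_shift', Rminus_diag in T.
    apply Rmult_integral in T. destruct T as [T|T]; [lra|auto].
Qed.

Inductive TP (d : nat) : (R -> R) -> Prop :=
| TPcos : forall s q c, d = (s + 2 * q)%nat -> TP d (fun t => c * cos (INR s * t))
| TPsin : forall s q c, d = (s + 2 * q)%nat -> TP d (fun t => c * sin (INR s * t))
| TPadd : forall f g, TP d f -> TP d g -> TP d (fun t => f t + g t)
| TPext : forall f g, TP d f -> (forall t, f t = g t) -> TP d g.

Lemma TP_scal d f c : TP d f -> TP d (fun t => c * f t).
Proof.
  induction 1 as [s q c0 H|s q c0 H|f g Hf IHf Hg IHg|f g Hf IH E].
  - eapply TPext. apply (TPcos d s q (c * c0)); auto. intros; cbv beta; ring.
  - eapply TPext. apply (TPsin d s q (c * c0)); auto. intros; cbv beta; ring.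
  - eapply TPext. apply TPadd; [exact IHf|exact IHg]. intros; cbv beta; ring.
  - eapply TPext. exact IH. intros; cbv beta; rewrite E; auto.
Qed.

Ltac trigsimp := repeat first [ rewrite cos_plus | rewrite sin_plus | rewrite cos_minus | rewrite sin_minus ].

Lemma prod_freq (A : R -> R -> Prop) d e s u q q' :
  d = (s + 2 * q)%nat -> e = (u + 2 * q')%nat ->
  ((u <= s)%nat -> (d + e = (s - u) + 2 * (u + q + q'))%nat) /\
  ((s < u)%nat -> (d + e = (u - s) + 2 * (s + q + q'))%nat) /\
  (d + e = (s + u) + 2 * (q + q'))%nat.
Proof. intros; lia. Qed.

Lemma TP_base_mul d e s u q q' c c' (F G : R -> R) :
  d = (s + 2 * q)%nat -> e = (u + 2 * q')%nat ->
  (F = cos \/ F = sin) -> (G = cos \/ G = sin) ->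
  TP (d + e) (fun t => c * F (INR s * t) * (c' * G (INR u * t))).
Proof.
  intros Hd He HF HG.
  destruct (prod_freq (fun _ _ => True) d e s u q q' Hd He) as [P1 [P2 P3]].
  assert (Hsum : forall t, INR (s + u) * t = INR s * t + INR u * t) by (intros; rewrite plus_INR; ring).
  destruct (le_lt_dec u s) as [L|L].
  - assert (Hdif : forall t, INR (s - u) * t = INR s * t - INR u * t) by (intros; rewrite minus_INR; auto; ring).
    destruct HF as [-> | ->]; destruct HG as [-> | ->].
    + eapply TPext. apply TPadd. apply (TPcos _ (s+u) (q+q') (c*c'/2)); auto. apply (TPcos _ (s-u) (u+q+q') (c*c'/2)); auto.
      intros t; cbv beta. rewrite Hsum, Hdif. trigsimp. field.
    + eapply TPext. apply TPadd. apply (TPsin _ (s+u) (q+q') (c*c'/2)); auto. apply (TPsin _ (s-u) (u+q+q') (-(c*c'/2))); auto.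
      intros t; cbv beta. rewrite Hsum, Hdif. trigsimp. field.
    + eapply TPext. apply TPadd. apply (TPsin _ (s+u) (q+q') (c*c'/2)); auto. apply (TPsin _ (s-u) (u+q+q') (c*c'/2)); auto.
      intros t; cbv beta. rewrite Hsum, Hdif. trigsimp. field.
    + eapply TPext. apply TPadd. apply (TPcos _ (s+u) (q+q') (-(c*c'/2))); auto. apply (TPcos _ (s-u) (u+q+q') (c*c'/2)); auto.
      intros t; cbv beta. rewrite Hsum, Hdif. trigsimp. field.
  - assert (Hdif : forall t, INR (u - s) * t = INR u * t - INR s * t) by (intros; rewrite minus_INR; [ring|lia]).
    destruct HF as [-> | ->]; destruct HG as [-> | ->].
    + eapply TPext. apply TPadd. apply (TPcos _ (s+u) (q+q') (c*c'/2)); auto. apply (TPcos _ (u-s) (s+q+q') (c*c'/2)); auto.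
      intros t; cbv beta. rewrite Hsum, Hdif. trigsimp. field.
    + eapply TPext. apply TPadd. apply (TPsin _ (s+u) (q+q') (c*c'/2)); auto. apply (TPsin _ (u-s) (s+q+q') (c*c'/2)); auto.
      intros t; cbv beta. rewrite Hsum, Hdif. trigsimp. field.
    + eapply TPext. apply TPadd. apply (TPsin _ (s+u) (q+q') (c*c'/2)); auto. apply (TPsin _ (u-s) (s+q+q') (-(c*c'/2))); auto.
      intros t; cbv beta. rewrite Hsum, Hdif. trigsimp. field.
    + eapply TPext. apply TPadd. apply (TPcos _ (s+u) (q+q') (-(c*c'/2))); auto. apply (TPcos _ (u-s) (s+q+q') (c*c'/2)); auto.
      intros t; cbv beta. rewrite Hsum, Hdif. trigsimp. field.
Qed.

Lemma TP_mul d e f g : TP d f -> TP e g -> TP (d + e) (fun t => f t * g t).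
Proof.
  intros Hf Hg. induction Hf as [s q c Hd|s q c Hd|f1 f2 _ IH1 _ IH2|f1 f2 _ IH E].
  - induction Hg as [u q' c' He|u q' c' He|g1 g2 _ IH1 _ IH2|g1 g2 _ IH E].
    + apply (TP_base_mul d e s u q q' c c' cos cos); auto.
    + apply (TP_base_mul d e s u q q' c c' cos sin); auto.
    + eapply TPext. apply TPadd; [apply IH1|apply IH2]. intros; cbv beta; ring.
    + eapply TPext. apply IH. intros; cbv beta; rewrite E; auto.
  - induction Hg as [u q' c' He|u q' c' He|g1 g2 _ IH1 _ IH2|g1 g2 _ IH E].
    + apply (TP_base_mul d e s u q q' c c' sin cos); auto.
    + apply (TP_base_mul d e s u q q' c c' sin sin); auto.
    + eapply TPext. apply TPadd; [apply IH1|apply IH2]. intros; cbv beta; ring.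
    + eapply TPext. apply IH. intros; cbv beta; rewrite E; auto.
  - eapply TPext. apply TPadd; [apply IH1|apply IH2]. intros; cbv beta; ring.
  - eapply TPext. apply IH. intros; cbv beta; rewrite E; auto.
Qed.

Lemma TP_one : TP 0 (fun _ => 1).
Proof. eapply TPext. apply (TPcos 0 0 0 1); auto. intros; simpl. rewrite Rmult_0_l, cos_0; ring. Qed.
Lemma TP_cos : TP 1 cos.
Proof. eapply TPext. apply (TPcos 1 1 0 1); auto. intros; simpl. rewrite !Rmult_1_l; auto. Qed.
Lemma TP_sin : TP 1 sin.
Proof. eapply TPext. apply (TPsin 1 1 0 1); auto. intros; simpl. rewrite !Rmult_1_l; auto. Qed.

Lemma TP_cospow i : TP i (fun t => cos t ^ i).
Proof.
  induction i. - eapply TPext. apply TP_one. intros; simpl; auto.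
  - eapply TPext. apply (TP_mul 1 i _ _ TP_cos IHi). intros; simpl; auto.
Qed.
Lemma TP_sinpow i : TP i (fun t => sin t ^ i).
Proof.
  induction i. - eapply TPext. apply TP_one. intros; simpl; auto.
  - eapply TPext. apply (TP_mul 1 i _ _ TP_sin IHi). intros; simpl; auto.
Qed.

Lemma shift_m m k t : (1 <= m)%nat -> INR m * (t + shiftm m k) = INR m * t + 2 * INR k * PI.
Proof. intros Hm. assert (0 < INR m) by (apply lt_0_INR; lia). unfold shiftm. field. lra. Qed.

Lemma TP_avg m d g : (1 <= m)%nat -> TP d g -> (d < 2 * m)%nat -> (d <= m + 1)%nat ->
  exists c a b, (forall t, sumk m (fun k => g (t + shiftm m k)) = c + a * cos (INR m * t) + b * sin (INR m * t))
    /\ (d <> m -> a = 0 /\ b = 0).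
Proof.
  intros Hm HT Hd1 Hd2.
  induction HT as [s q c Hd|s q c Hd|f g _ IH1 _ IH2|f g _ IH E].
  - destruct (Nat.eq_dec s 0) as [S0|S0]; [|destruct (Nat.eq_dec s m) as [Sm|Sm]].
    + subst s. exists (INR m * c), 0, 0. split; [|auto].
      intros t. rewrite (sumk_ext _ _ (fun _ => c)). rewrite sumk_const; ring.
      intros k. simpl INR. rewrite Rmult_0_l, cos_0; ring.
    + subst s. exists 0, (INR m * c), 0. split; [|lia].
      intros t. rewrite (sumk_ext _ _ (fun _ => c * cos (INR m * t))). rewrite sumk_const; ring.
      intros k. rewrite shift_m by auto. rewrite cos_shift'. auto.
    + exists 0, 0, 0. split; [|auto]. intros t.
      rewrite sumk_scal. destruct (trig_sum_zero m s t) as [T _]; try lia. rewrite T; ring.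
  - destruct (Nat.eq_dec s 0) as [S0|S0]; [|destruct (Nat.eq_dec s m) as [Sm|Sm]].
    + subst s. exists 0, 0, 0. split; [|auto].
      intros t. rewrite (sumk_ext _ _ (fun _ => 0)). rewrite sumk_const; ring.
      intros k. simpl INR. rewrite Rmult_0_l, sin_0; ring.
    + subst s. exists 0, 0, (INR m * c). split; [|lia].
      intros t. rewrite (sumk_ext _ _ (fun _ => c * sin (INR m * t))). rewrite sumk_const; ring.
      intros k. rewrite shift_m by auto. rewrite sin_shift'. auto.
    + exists 0, 0, 0. split; [|auto]. intros t.
      rewrite sumk_scal. destruct (trig_sum_zero m s t) as [_ T]; try lia. rewrite T; ring.
  - destruct IH1 as [c1 [a1 [b1 [H1 K1]]]]; destruct IH2 as [c2 [a2 [b2 [H2 K2]]]].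
    exists (c1 + c2), (a1 + a2), (b1 + b2). split.
    + intros t. rewrite sumk_plus, H1, H2. ring.
    + intros N. destruct (K1 N), (K2 N). split; lra.
  - destruct IH as [c1 [a1 [b1 [H1 K1]]]]. exists c1, a1, b1. split; auto.
    intros t. rewrite <- H1. apply sumk_ext. intros; rewrite E; auto.
Qed.

Definition Good (m n : nat) (F : R -> R -> R) : Prop :=
  exists (C : R -> R) (a b : R),
    (forall r t, sumk m (fun k => F r (t + shiftm m k)) = C r + r ^ m * (a * cos (INR m * t) + b * sin (INR m * t)))
    /\ ((n <= m)%nat -> a = 0 /\ b = 0).

Lemma Good_add m n F G : Good m n F -> Good m n G -> Good m n (fun r t => F r t + G r t).
Proof.
  intros [C1 [a1 [b1 [H1 K1]]]] [C2 [a2 [b2 [H2 K2]]]].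
  exists (fun r => C1 r + C2 r), (a1 + a2), (b1 + b2). split.
  - intros r t. rewrite sumk_plus, H1, H2. ring.
  - intros N. destruct (K1 N), (K2 N). split; lra.
Qed.

Lemma Good_sum m n (F : nat -> R -> R -> R) : (forall i, Good m n (F i)) ->
  forall N, Good m n (fun r t => sum_f_R0 (fun i => F i r t) N).
Proof.
  intros H N. induction N as [|N IH]; simpl.
  - destruct (H 0%nat) as [C [a [b [H1 K]]]]. exists C, a, b. split; auto.
  - apply (Good_add m n _ _ IH (H (S N))).
Qed.

Lemma Good_term m n P i j : (1 <= m)%nat -> deg_lt P n -> (n <= m + 2)%nat -> (n <= 2 * m)%nat ->
  Good m n (fun r t => coef P i j * (r * cos t) ^ i * (r * sin t) ^ j).
Proof.
  intros Hm Hdeg Hn1 Hn2.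
  destruct (le_lt_dec n (i + j)) as [L|L].
  - rewrite (Hdeg i j L). exists (fun _ => 0), 0, 0. split; [|auto].
    intros r t. rewrite (sumk_ext _ _ (fun _ => 0)). rewrite sumk_const; ring. intros; ring.
  - destruct (TP_avg m (i + j) (fun t => cos t ^ i * sin t ^ j) Hm (TP_mul _ _ _ _ (TP_cospow i) (TP_sinpow j)))
      as [c [a [b [H K]]]]; try lia.
    assert (Ex : forall r t, coef P i j * (r * cos t) ^ i * (r * sin t) ^ j = (coef P i j * r ^ (i + j)) * (cos t ^ i * sin t ^ j)).
    { intros. rewrite !Rpow_mult_distr, pow_add. ring. }
    destruct (Nat.eq_dec (i + j) m) as [E|E].
    + exists (fun r => coef P i j * r ^ (i + j) * c), (coef P i j * a), (coef P i j * b). split; [|lia].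
      intros r t. rewrite (sumk_ext _ _ (fun k => (coef P i j * r ^ (i + j)) * (cos (t + shiftm m k) ^ i * sin (t + shiftm m k) ^ j))) by (intros; apply Ex).
      rewrite sumk_scal, H, E. ring.
    + destruct (K E) as [-> ->].
      exists (fun r => coef P i j * r ^ (i + j) * c), 0, 0. split; [|auto].
      intros r t. rewrite (sumk_ext _ _ (fun k => (coef P i j * r ^ (i + j)) * (cos (t + shiftm m k) ^ i * sin (t + shiftm m k) ^ j))) by (intros; apply Ex).
      rewrite sumk_scal, H. ring.
Qed.

Lemma peval_avg m n P : (1 <= m)%nat -> deg_lt P n -> (n <= m + 2)%nat -> (n <= 2 * m)%nat ->
  Good m n (fun r t => peval P (r * cos t) (r * sin t)).
Proof.
  intros. unfold peval.
  apply (Good_sum m n (fun i r t => sum_f_R0 (fun j => coef P i j * (r * cos t) ^ i * (r * sin t) ^ j) (pbound P))).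
  intros i. apply (Good_sum m n (fun j r t => coef P i j * (r * cos t) ^ i * (r * sin t) ^ j)).
  intros j. apply Good_term; auto.
Qed.

Lemma stab_rot_eq f a : in_stab f (rot a) -> forall r t, f (r * cos (t - a)) (r * sin (t - a)) = f (r * cos t) (r * sin t).
Proof. intros [_ H] r t. specialize (H (r * cos t) (r * sin t)). rewrite app_rot in H. exact H. Qed.
Lemma stab_refl_eq f a : in_stab f (refl a) -> forall r t, f (r * cos (a - t)) (r * sin (a - t)) = f (r * cos t) (r * sin t).
Proof. intros [_ H] r t. specialize (H (r * cos t) (r * sin t)). rewrite app_refl in H. exact H. Qed.
Lemma stab_rot_intro f a : (forall r t, f (r * cos (t - a)) (r * sin (t - a)) = f (r * cos t) (r * sin t)) -> in_stab f (rot a).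
Proof. intros H. split; [apply inO2_rot|]. intros x y. destruct (polar x y) as [r [t [-> ->]]]. rewrite app_rot. apply H. Qed.
Lemma stab_refl_intro f a : (forall r t, f (r * cos (a - t)) (r * sin (a - t)) = f (r * cos t) (r * sin t)) -> in_stab f (refl a).
Proof. intros H. split; [apply inO2_refl|]. intros x y. destruct (polar x y) as [r [t [-> ->]]]. rewrite app_refl. apply H. Qed.

Lemma pm_polar m r t : pm m (r * cos t) (r * sin t) = r ^ m * cos (INR m * t).
Proof. unfold pm. rewrite zpow_polar. reflexivity. Qed.
Lemma qm_polar m r t : qm m (r * cos t) (r * sin t) = r ^ m * sin (INR m * t).
Proof. unfold qm. rewrite zpow_polar. reflexivity. Qed.

Lemma sigma_rot m : sigma m = rot (2 * PI / INR m).
Proof. reflexivity. Qed.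

Lemma angle_k m th k : (1 <= m)%nat -> INR m * th = 2 * INR k * PI -> th = INR k * (2 * PI / INR m).
Proof. intros Hm E. assert (0 < INR m) by (apply lt_0_INR; lia).
  apply (Rmult_eq_reg_l (INR m)); [|lra]. rewrite E. field. lra. Qed.

Lemma mpow_sigma m k : mpow (sigma m) k = rot (INR k * (2 * PI / INR m)).
Proof. rewrite sigma_rot, mpow_rot. reflexivity. Qed.

Lemma arg_k m k t : (1 <= m)%nat -> INR m * (t - INR k * (2 * PI / INR m)) = INR m * t - 2 * INR k * PI.
Proof. intros Hm. assert (0 < INR m) by (apply lt_0_INR; lia). field. lra. Qed.
Lemma arg_k' m k t : (1 <= m)%nat -> INR m * (INR k * (2 * PI / INR m) - t) = - (INR m * t) + 2 * INR k * PI.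
Proof. intros Hm. assert (0 < INR m) by (apply lt_0_INR; lia). field. lra. Qed.

Lemma inD_rot m k : inD m (rot (INR k * (2 * PI / INR m))).
Proof. exists k. left. rewrite mpow_sigma. auto. Qed.
Lemma inD_refl m k : inD m (refl (INR k * (2 * PI / INR m))).
Proof. exists k. right. rewrite mpow_sigma, rot_tau. auto. Qed.
Lemma inK_rot m k : inK m (rot (INR k * (2 * PI / INR m))).
Proof. exists k. rewrite mpow_sigma. auto. Qed.

Lemma mth_nonneg m th : 0 <= th -> 0 <= INR m * th.
Proof. intros; apply Rmult_le_pos; auto; apply pos_INR. Qed.

Lemma part1a m : (1 <= m)%nat -> forall A, in_stab (pm m) A <-> inD m A.
Proof.
  intros Hm A. split.
  - intros HS. destruct (O2_class A (proj1 HS)) as [th [Hth [-> | ->]]].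
    + pose proof (stab_rot_eq _ _ HS 1 0) as E. rewrite !pm_polar, pow1 in E.
      replace (INR m * (0 - th)) with (- (INR m * th)) in E by ring.
      rewrite cos_neg, Rmult_0_r, cos_0 in E.
      destruct (cos1 _ (mth_nonneg m th Hth) ltac:(lra)) as [k Hk].
      rewrite (angle_k m th k Hm Hk). apply inD_rot.
    + pose proof (stab_refl_eq _ _ HS 1 0) as E. rewrite !pm_polar, pow1 in E.
      rewrite Rminus_0_r, Rmult_0_r, cos_0 in E.
      destruct (cos1 _ (mth_nonneg m th Hth) ltac:(lra)) as [k Hk].
      rewrite (angle_k m th k Hm Hk). apply inD_refl.
  - intros [k [-> | ->]]; rewrite mpow_sigma; [|rewrite rot_tau].
    + apply stab_rot_intro. intros r t. rewrite !pm_polar, arg_k, cos_shift by auto. auto.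
    + apply stab_refl_intro. intros r t. rewrite !pm_polar, arg_k' by auto.
      rewrite cos_shift', cos_neg. auto.
Qed.

Definition F2 (m : nat) := fun x y => pm m x y + (x ^ 2 + y ^ 2) * qm m x y.

Lemma F2_polar m r t : F2 m (r * cos t) (r * sin t) = r ^ m * cos (INR m * t) + r ^ 2 * (r ^ m * sin (INR m * t)).
Proof. unfold F2. rewrite pm_polar, qm_polar, sq_polar. auto. Qed.

Lemma two_radii m c s : (forall r, r = 1 \/ r = 2 -> r ^ m * c + r ^ 2 * (r ^ m * s) = r ^ m) -> c = 1 /\ s = 0.
Proof.
  intros H. pose proof (H 1 (or_introl eq_refl)) as H1. pose proof (H 2 (or_intror eq_refl)) as H2.
  rewrite pow1 in H1. assert (P : 0 < 2 ^ m) by (apply pow_lt; lra).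
  assert (H2' : 2 ^ m * (c + 4 * s - 1) = 0) by (simpl pow in H2; lra).
  apply Rmult_integral in H2'. destruct H2' as [X|X]; [lra|]. simpl pow in H1. lra.
Qed.

Lemma part2a m : (2 <= m)%nat -> forall A, in_stab (F2 m) A <-> inK m A.
Proof.
  intros Hm A. assert (Hm1 : (1 <= m)%nat) by lia. split.
  - intros HS. destruct (O2_class A (proj1 HS)) as [th [Hth [-> | ->]]].
    + pose proof (stab_rot_eq _ _ HS) as E.
      assert (forall r, r = 1 \/ r = 2 -> r ^ m * cos (INR m * th) + r ^ 2 * (r ^ m * (- sin (INR m * th))) = r ^ m) as G.
      { intros r _. specialize (E r 0). rewrite !F2_polar in E.
        replace (INR m * (0 - th)) with (- (INR m * th)) in E by ring.
        rewrite cos_neg, sin_neg, Rmult_0_r, cos_0, sin_0 in E. lra. }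
      destruct (two_radii m _ _ G) as [C _].
      destruct (cos1 _ (mth_nonneg m th Hth) C) as [k Hk].
      rewrite (angle_k m th k Hm1 Hk). apply inK_rot.
    + exfalso. pose proof (stab_refl_eq _ _ HS) as E.
      assert (forall r, r = 1 \/ r = 2 -> r ^ m * cos (INR m * th) + r ^ 2 * (r ^ m * sin (INR m * th)) = r ^ m) as G.
      { intros r _. specialize (E r 0). rewrite !F2_polar in E.
        rewrite Rminus_0_r, Rmult_0_r, cos_0, sin_0 in E. lra. }
      destruct (two_radii m _ _ G) as [C S].
      assert (0 < INR m) by (apply lt_0_INR; lia).
      specialize (E 1 (PI / (2 * INR m))). rewrite !F2_polar in E.
      replace (INR m * (th - PI / (2 * INR m))) with (INR m * th - PI / 2) in E by (field; lra).
      replace (INR m * (PI / (2 * INR m))) with (PI / 2) in E by (field; lra).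
      rewrite cos_minus, sin_minus, C, S, cos_PI2, sin_PI2 in E. rewrite pow1 in E. lra.
  - intros [k ->]. rewrite mpow_sigma.
    apply stab_rot_intro. intros r t. rewrite !F2_polar, arg_k, cos_shift, sin_shift by auto. auto.
Qed.

Lemma inK1 A : inK 1 A <-> A = mid.
Proof.
  split.
  - intros [k ->]. rewrite mpow_sigma. simpl (INR 1).
    replace (INR k * (2 * PI / 1)) with (0 + 2 * INR k * PI) by field.
    unfold rot, mid. rewrite cos_period, sin_period, cos_0, sin_0, Ropp_0. auto.
  - intros ->. exists 0%nat. reflexivity.
Qed.

Lemma part3a A : in_stab (fun x y => x + x * y) A <-> inK 1 A.
Proof.
  rewrite inK1. split.
  - intros [HO H]. destruct A as [a b c d]. unfold inO2, mmul, mtrans, mid in HO; cbn in HO.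
    injection HO as H1 H2 H3 H4. unfold app, mtrans in H; cbn in H.
    pose proof (H 1 0) as E1. pose proof (H (-1) 0) as E2. pose proof (H 0 1) as E3.
    pose proof (H 0 (-1)) as E4. pose proof (H 1 1) as E5.
    assert (a = 1) by lra. subst a.
    assert (c = 0) by lra. subst c.
    assert (b = 0) by lra. subst b.
    assert (d = 1) by lra. subst d. reflexivity.
  - intros ->. split.
    + unfold inO2, mmul, mtrans, mid; cbn. f_equal; ring.
    + intros x y. unfold app, mtrans, mid; cbn. ring.
Qed.

Lemma periodic m f : (1 <= m)%nat -> in_stab f (rot (2 * PI / INR m)) ->
  forall r t k, f (r * cos (t + shiftm m k)) (r * sin (t + shiftm m k)) = f (r * cos t) (r * sin t).
Proof.
  intros Hm HS r t k. assert (0 < INR m) by (apply lt_0_INR; lia).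
  induction k as [|k IH].
  - unfold shiftm. replace (t + 2 * PI * INR 0 / INR m) with t by (simpl; unfold Rdiv; ring). auto.
  - pose proof (stab_rot_eq _ _ HS r (t + shiftm m (S k))) as E.
    replace (t + shiftm m (S k) - 2 * PI / INR m) with (t + shiftm m k) in E
      by (unfold shiftm; rewrite S_INR; field; lra).
    rewrite <- E. auto.
Qed.

Lemma avg_eq m n P : (1 <= m)%nat -> deg_lt P n -> (n <= m + 2)%nat -> (n <= 2 * m)%nat ->
  in_stab (peval P) (rot (2 * PI / INR m)) ->
  exists C a b, (forall r t, INR m * peval P (r * cos t) (r * sin t) = C r + r ^ m * (a * cos (INR m * t) + b * sin (INR m * t)))
   /\ ((n <= m)%nat -> a = 0 /\ b = 0).
Proof.
  intros Hm Hd Hn1 Hn2 HS.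
  destruct (peval_avg m n P Hm Hd Hn1 Hn2) as [C [a [b [H K]]]].
  exists C, a, b. split; auto. intros r t. rewrite <- H, <- sumk_const.
  apply sumk_ext. intros k. symmetry. apply (periodic m (peval P) Hm HS).
Qed.

Lemma rot_neq_refl a b : rot a <> refl b.
Proof.
  intros E. pose proof (f_equal m11 E) as E1. pose proof (f_equal m22 E) as E2.
  pose proof (f_equal m12 E) as E3. pose proof (f_equal m21 E) as E4.
  unfold rot, refl in *; cbn in *. pose proof (cs1 a). nra.
Qed.

Lemma part1b m : (1 <= m)%nat -> forall P, deg_lt P m -> ~ (forall A, in_stab (peval P) A <-> inD m A).
Proof.
  intros Hm P Hd H. assert (Hm0 : 0 < INR m) by (apply lt_0_INR; lia).
  assert (HS : in_stab (peval P) (rot (2 * PI / INR m))).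
  { apply H. replace (2 * PI / INR m) with (INR 1 * (2 * PI / INR m)) by (simpl; ring). apply inD_rot. }
  destruct (avg_eq m m P Hm Hd ltac:(lia) ltac:(lia) HS) as [C [a [b [E K]]]].
  destruct (K (le_n m)) as [-> ->].
  assert (HR : in_stab (peval P) (rot (PI / INR m))).
  { apply stab_rot_intro. intros r t. apply (Rmult_eq_reg_l (INR m)); [|lra]. rewrite !E. ring. }
  apply H in HR. destruct HR as [k [X|X]]; rewrite mpow_sigma in X; [|rewrite rot_tau in X].
  - assert (Y : mpow (rot (PI / INR m)) m = mpow (rot (INR k * (2 * PI / INR m))) m) by (rewrite X; auto).
    rewrite !mpow_rot in Y. apply (f_equal m11) in Y. unfold rot in Y; cbn in Y.
    replace (INR m * (PI / INR m)) with PI in Y by (field; lra).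
    replace (INR m * (INR k * (2 * PI / INR m))) with (0 + 2 * INR k * PI) in Y by (field; lra).
    rewrite cos_period, cos_0, cos_PI in Y. lra.
  - eapply rot_neq_refl; eauto.
Qed.

Lemma refl_coef a b : exists c s, c * c + s * s = 1 /\ a * c + b * s = a /\ a * s - b * c = b.
Proof.
  destruct (Req_dec (a * a + b * b) 0) as [Z|Z].
  - exists 1, 0. assert (a = 0) by nra. assert (b = 0) by nra. subst. repeat split; ring.
  - exists ((a * a - b * b) / (a * a + b * b)), (2 * a * b / (a * a + b * b)).
    split; [|split]; field_simplify_eq; auto; ring.
Qed.

Lemma partKb m n : (1 <= m)%nat -> (n <= m + 2)%nat -> (n <= 2 * m)%nat ->
  forall P, deg_lt P n -> ~ (forall A, in_stab (peval P) A <-> inK m A).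
Proof.
  intros Hm Hn1 Hn2 P Hd H. assert (Hm0 : 0 < INR m) by (apply lt_0_INR; lia).
  assert (HS : in_stab (peval P) (rot (2 * PI / INR m))).
  { apply H. replace (2 * PI / INR m) with (INR 1 * (2 * PI / INR m)) by (simpl; ring). apply inK_rot. }
  destruct (avg_eq m n P Hm Hd Hn1 Hn2 HS) as [C [a [b [E _]]]].
  destruct (refl_coef a b) as [c [s [Hcs [Ha Hb]]]].
  destruct (angle_exists c s Hcs) as [phi [_ [Hc Hs]]].
  assert (HR : in_stab (peval P) (refl (phi / INR m))).
  { apply stab_refl_intro. intros r t. apply (Rmult_eq_reg_l (INR m)); [|lra]. rewrite !E.
    replace (INR m * (phi / INR m - t)) with (phi - INR m * t) by (field; lra).
    rewrite cos_minus, sin_minus, Hc, Hs.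
    set (X := cos (INR m * t)). set (Y := sin (INR m * t)).
    replace (a * (c * X + s * Y) + b * (s * X - c * Y)) with ((a * c + b * s) * X + (a * s - b * c) * Y) by ring.
    rewrite Ha, Hb. auto. }
  apply H in HR. destruct HR as [k X]. rewrite mpow_sigma in X.
  eapply rot_neq_refl; eauto.
Qed.

Theorem mainTheorem12 :
  (forall m : nat, (1 <= m)%nat ->
     (forall A, in_stab (pm m) A <-> inD m A) /\
     (forall P : poly2, deg_lt P m -> ~ (forall A, in_stab (peval P) A <-> inD m A)))
  /\
  (forall m : nat, (2 <= m)%nat ->
     (forall A, in_stab (fun x y => pm m x y + (x ^ 2 + y ^ 2) * qm m x y) A <-> inK m A) /\
     (forall P : poly2, deg_lt P (m + 2) -> ~ (forall A, in_stab (peval P) A <-> inK m A)))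
  /\
  ((forall A, in_stab (fun x y => x + x * y) A <-> inK 1 A) /\
   (forall P : poly2, deg_lt P 2 -> ~ (forall A, in_stab (peval P) A <-> inK 1 A))).
Proof.
  split; [|split].
  - intros m Hm. split; [apply part1a; auto|apply part1b; auto].
  - intros m Hm. split.
    + exact (part2a m Hm).
    + apply partKb; lia.
  - split; [apply part3a|]. apply partKb; lia.
Qed.
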